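(* Let $\mathcal G=(V_{\min},V_{\max},E,w,\lambda)$ be an improving discounted payoff game, $\sigma$ a joint strategy, and $\nu$ a basis valuation of $H$ minimising $f_\sigma$ over all solutions of $H$, with $f_\sigma(\nu)\neq0$. Assume there are no local improvements of $\sigma$ for $\nu$, i.e. $\mathsf{offset}(\nu,(v,v'))\ge\mathsf{offset}(\nu,(v,\sigma(v)))$ for all $(v,v')\in E$. Let $E'$ be a given set of edges with $E_\nu\subseteq E'\subseteq S^\sigma_\nu$ containing an outgoing edge of every vertex. Then there exist a neighbouring valuation $\nu''$ of $\nu$ and a joint strategy $\sigma'$ with $f_{\sigma'}(\nu'')<f_\sigma(\nu)$; such a $\sigma'$ is better than $\sigma$, and it can be chosen such that $(v,\sigma'(v))\in E'$ for all $v\in V$.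
   Context: A discounted payoff game is a tuple $\mathcal G=(V_{\min},V_{\max},E,w,\lambda)$ with $V=V_{\min}\cup V_{\max}$ finite (disjoint union of Min and Max vertices), $E\subseteq V\times V$ with every vertex having an outgoing edge, $w:E\to\mathbb R$, $\lambda:E\to[0,1)$. A joint strategy is a map $\sigma:V\to V$ with $(v,\sigma(v))\in E$ for all $v$. $H$ is the system of inequations over $x\in\mathbb R^V$ containing, for each edge $e=(v,v')$, $I_e$: $x(v)\ge w_e+\lambda_e x(v')$ if $v\in V_{\max}$ and $x(v)\le w_e+\lambda_e x(v')$ if $v\in V_{\min}$. A basis of $H$ is a set of $|V|$ inequations of $H$ whose equality versions have a unique common solution; if that solution satisfies $H$ it is the basis valuation of that basis. $\mathsf{offset}(x,(v,v'))=x(v)-(w_{(v,v')}+\lambda_{(v,v')}x(v'))$ if $v\in V_{\max}$, and $(w_{(v,v')}+\lambda_{(v,v')}x(v'))-x(v)$ otherwise; $f_\sigma(x)=\sum_{v\in V}\mathsf{offset}(x,(v,\sigma(v)))$. $S^\sigma_\nu=\{(v,v')\in E\mid \mathsf{offset}(\nu,(v,v'))=\mathsf{offset}(\nu,(v,\sigma(v)))\}$ and $E_\nu=\{(v,v')\in E\mid\mathsf{offset}(\nu,(v,v'))=0\}$. A joint strategy $\sigma'$ is better than $\sigma$ iff $\min\{f_{\sigma'}(x)\mid x\text{ solves }H\}<\min\{f_{\sigma}(x)\mid x\text{ solves }H\}$. The game is sharp if every basis valuation satisfies exactly $|V|$ inequations of $H$ with equality (so it is the valuation of a unique basis). A sharp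 game is improving if for every joint strategy $\sigma$ and every basis valuation $\nu$ that does not minimise $f_\sigma$ over the solutions of $H$, there is a basis obtained from the basis of $\nu$ by exchanging exactly one inequation whose basis valuation $\nu'$ satisfies $f_\sigma(\nu')<f_\sigma(\nu)$. A neighbouring valuation of $\nu$ is a basis valuation of a basis obtained from the basis of $\nu$ by exchanging exactly one inequation. *)

(* Defs.v *)
From HB Require Import structures.
From mathcomp Require Import all_boot all_order all_algebra.
From mathcomp Require Import reals.
Set Implicit Arguments. Unset Strict Implicit. Unset Printing Implicit Defensive.
Import Order.TTheory GRing.Theory Num.Theory.
Local Open Scope ring_scope.

(* Max vertices are those with isMax v = true, Min vertices the others
   (so V = V_min ⊎ V_max).  Edges are pairs (v,v'); the weight and discount
   are given as functions on V*V, only their values on edges matter. *)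
Record game (R : realType) (V : finType) := Game {
  isMax : pred V;
  E : {set V * V};
  w : V * V -> R;
  lam : V * V -> R
}.

Section Defs.
Variables (R : realType) (V : finType) (G : game R V).

Definition valid_game : Prop :=
  (forall v : V, exists v' : V, (v, v') \in E G) /\
  (forall e, e \in E G -> 0 <= lam G e /\ lam G e < 1).

Definition ineq_holds (x : V -> R) (e : V * V) : Prop :=
  if isMax G e.1 then x e.1 >= w G e + lam G e * x e.2
  else x e.1 <= w G e + lam G e * x e.2.

Definition eq_holds (x : V -> R) (e : V * V) : bool :=
  x e.1 == w G e + lam G e * x e.2.

Definition solves_H (x : V -> R) : Prop :=
  forall e, e \in E G -> ineq_holds x e.

Definition is_basis (B : {set V * V}) : Prop :=
  B \subset E G /\ #|B| = #|V| /\
  exists x : V -> R, (forall e, e \in B -> eq_holds x e) /\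
    (forall y : V -> R, (forall e, e \in B -> eq_holds y e) -> forall v, y v = x v).

Definition basis_val_of (B : {set V * V}) (nu : V -> R) : Prop :=
  is_basis B /\ (forall e, e \in B -> eq_holds nu e) /\ solves_H nu.

Definition basis_val (nu : V -> R) : Prop := exists B, basis_val_of B nu.

Definition joint_strategy (s : V -> V) : Prop := forall v, (v, s v) \in E G.

Definition offset (x : V -> R) (e : V * V) : R :=
  if isMax G e.1 then x e.1 - (w G e + lam G e * x e.2)
  else (w G e + lam G e * x e.2) - x e.1.

Definition f_strat (s : V -> V) (x : V -> R) : R :=
  \sum_(v : V) offset x (v, s v).

Definition S_set (s : V -> V) (nu : V -> R) : {set V * V} :=
  [set e in E G | offset nu e == offset nu (e.1, s e.1)].
Definition E_tight (nu : V -> R) : {set V * V} :=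
  [set e in E G | offset nu e == 0].

Definition minimises (s : V -> V) (nu : V -> R) : Prop :=
  solves_H nu /\ forall x, solves_H x -> f_strat s nu <= f_strat s x.

Definition is_min_value (s : V -> V) (m : R) : Prop :=
  (exists x, solves_H x /\ f_strat s x = m) /\
  forall x, solves_H x -> m <= f_strat s x.

Definition better (s' s : V -> V) : Prop :=
  exists m' m, is_min_value s' m' /\ is_min_value s m /\ m' < m.

Definition sharp : Prop :=
  forall nu, basis_val nu -> #|[set e in E G | eq_holds nu e]| = #|V|.

Definition neighbouring (nu nu' : V -> R) : Prop :=
  exists B e e', [/\ basis_val_of B nu, e \in B, e' \in E G, e' \notin B &
                     basis_val_of (e' |: (B :\ e)) nu'].

Definition improving : Prop :=
  sharp /\
  forall s nu, joint_strategy s -> basis_val nu -> ~ minimises s nu ->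
    exists nu', neighbouring nu nu' /\ f_strat s nu' < f_strat s nu.

End Defs.

(* Main.v *)
Require Import Defs.
From HB Require Import structures.
From mathcomp Require Import all_boot all_order all_algebra.
From mathcomp Require Import reals.
From mathcomp Require Import boolp classical_sets ring lra.
Import Order.TTheory GRing.Theory Num.Theory.
Local Open Scope ring_scope.

Section GameFix.
Local Open Scope classical_set_scope.
Variables (R : realType) (V : finType) (Tp : pred V) (tE : rel V)
  (mx : pred V) (lm : V -> V -> R) (c : V -> R).
Hypothesis hT : forall w, Tp w -> exists t, tE w t.
Hypothesis hl : forall w t, tE w t -> 0 <= lm w t /\ lm w t < 1.
Hypothesis hc : forall v, -1 <= c v <= 1.

Definition Bop (x : V -> R) (w : V) : R :=
  if Tp w then
    (if mx w then \big[Order.max/(-1)]_(t | tE w t) (lm w t * x t)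
     else \big[Order.min/1]_(t | tE w t) (lm w t * x t))
  else c w.

Definition box (x : V -> R) := forall v, -1 <= x v <= 1.

Lemma lm_box w t y : tE w t -> -1 <= y <= 1 -> -1 <= lm w t * y <= 1.
Proof.
move=> /hl [h0 h1] /andP [a b]; apply/andP; split; nra.
Qed.

Lemma Bop_mono x y : (forall v, x v <= y v) -> forall v, Bop x v <= Bop y v.
Proof.
move=> xy v; rewrite /Bop; case: (Tp v) => //; case: (mx v).
- apply: le_bigmax2 => t /hl [h0 _]; exact: ler_wpM2l.
- apply: le_bigmin2 => t /hl [h0 _]; exact: ler_wpM2l.
Qed.

Lemma Bop_box x : box x -> box (Bop x).
Proof.
move=> bx v; rewrite /Bop; case Tv: (Tp v); last exact: hc.
have [t0 tt0] := hT _ Tv.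
have Ht := fun t (h : tE v t) => lm_box _ _ (x t) h (bx t).
case: (mx v); apply/andP; split.
- apply: (@bigmax_sup _ _ _ _ t0) => //; by case/andP: (Ht t0 tt0).
- apply: bigmax_le => //; first by lra.
  by move=> t /Ht /andP[].
- apply: le_bigmin => //; first by lra.
  by move=> t /Ht /andP[].
- apply: (@bigmin_inf _ _ _ _ t0) => //; by case/andP: (Ht t0 tt0).
Qed.

Definition Sfix (x : V -> R) : Prop := box x /\ forall v, x v <= Bop x v.

Lemma fixpoint_exists : exists d, box d /\ forall v, d v = Bop d v.
Proof.
pose A v : set R := fun r => exists2 x, Sfix x & x v = r.
pose D v := sup (A v).
have xm : Sfix (fun _ => -1).
  have bm : box (fun _ : V => -1) by move=> v; rewrite lexx /=; lra.
  split => // v; by case/andP: (Bop_box _ bm v).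
have An v : A v !=set0 by exists (-1); exists (fun _ => -1).
have Au v : ubound (A v) 1 by move=> r [x [bx _] <-]; case/andP: (bx v).
have Ahu v : has_ubound (A v) by exists 1.
have xleD x : Sfix x -> forall v, x v <= D v.
  by move=> Sx v; apply: ub_le_sup => //; exists x.
have bD : box D.
  move=> v; apply/andP; split.
  - by apply: (xleD _ xm).
  - by apply: ge_sup.
have DleB v : D v <= Bop D v.
  apply: ge_sup => // r [x Sx <-].
  apply: le_trans (Bop_mono _ _ (xleD x Sx) v).
  by case: Sx => _ ->.
have SB : Sfix (Bop D) by split; [exact: Bop_box | exact: Bop_mono].
exists D; split => // v; apply/eqP; rewrite eq_le DleB /=.
exact: xleD.
Qed.

Lemma game_fix : exists d : V -> R, box d /\
  (forall u, ~~ Tp u -> d u = c u) /\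
  (forall w, Tp w -> exists t, tE w t /\ d w = lm w t * d t) /\
  (forall w t, Tp w -> tE w t ->
     if mx w then lm w t * d t <= d w else d w <= lm w t * d t).
Proof.
have [d [bd fd]] := fixpoint_exists.
have Ht := fun w t (h : tE w t) => lm_box _ _ (d t) h (bd t).
exists d; split => //; split; [|split].
- by move=> u /negbTE Tu; rewrite fd /Bop Tu.
- move=> w Tw; have [t0 tt0] := hT _ Tw.
  rewrite fd /Bop Tw; case: (mx w).
  + have [i Pi ->] := @eq_bigmax _ _ _ _ t0 (fun t => tE w t) (fun t => lm w t * d t) tt0
        (fun i h => proj1 (andP (Ht _ _ h))).
    by exists i; split => //; rewrite -fd.
  + have [i Pi ->] := @eq_bigmin _ _ _ _ t0 (fun t => tE w t) (fun t => lm w t * d t) tt0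
        (fun i h => proj2 (andP (Ht _ _ h))).
    by exists i; split => //; rewrite -fd.
- move=> w t Tw tt; rewrite [d w]fd /Bop Tw; case: (mx w).
  + exact: le_bigmax_cond.
  + exact: bigmin_le_cond.
Qed.
End GameFix.

Set Implicit Arguments.
Section Aux.
Variables (R : realType) (V : finType) (G : game R V).

Lemma ineq_off x e : ineq_holds G x e <-> 0 <= offset G x e.
Proof. by rewrite /ineq_holds /offset; case: (isMax G e.1); rewrite subr_ge0. Qed.

Definition Dd (d : V -> R) (e : V * V) : R :=
  if isMax G e.1 then d e.1 - lam G e * d e.2 else lam G e * d e.2 - d e.1.

Lemma off_lin (nu d : V -> R) t e :
  offset G (fun v => nu v + t * d v) e = offset G nu e + t * Dd d e.
Proof. by rewrite /offset /Dd; case: (isMax G e.1); ring. Qed.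

Lemma bv_uniq B m1 m2 : basis_val_of G B m1 -> basis_val_of G B m2 -> m1 = m2.
Proof.
move=> [[_ [_ [x [_ ux]]]] [e1 _]] [_ [e2 _]].
by apply: funext => v; rewrite (ux _ e1) (ux _ e2).
Qed.

Definition valB (B : {set V * V}) : V -> R :=
  match pselect (exists mu, basis_val_of G B mu) with
  | left h => projT1 (cid h)
  | right _ => fun _ => 0
  end.

Lemma valBE B mu : basis_val_of G B mu -> valB B = mu.
Proof.
move=> h; rewrite /valB; case: pselect => [h'|]; last by move=> /(_ (ex_intro _ mu h)).
case: (cid h') => m hm /=; exact: bv_uniq hm h.
Qed.

Lemma exists_min tau mu : joint_strategy G tau -> improving G -> basis_val G mu ->
  exists mus, minimises G tau mus.
Proof.
move=> jt [_ imp] [B0 hB0].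
pose PB := fun B : {set V * V} => `[< exists m, basis_val_of G B m >].
have PB0 : PB B0 by apply/asboolP; exists mu.
case: (@arg_minP _ _ _ B0 PB (fun B => f_strat G tau (valB B)) PB0) => B PB_B Hmin.
have [m hm] : exists m, basis_val_of G B m by apply/asboolP.
have vm := valBE hm.
case: (pselect (minimises G tau m)) => [mm|nm]; first by exists m.
have [m' [[B1 [e [e' [h1 _ _ _ h2]]]] lt]] := imp tau m jt (ex_intro _ B hm) nm.
have PB1 : PB (e' |: (B1 :\ e)) by apply/asboolP; exists m'.
have := Hmin _ PB1; rewrite vm (valBE h2) => le.
by have := lt_le_trans lt le; rewrite ltxx.
Qed.

End Aux.

Theorem theorem4p4 (R : realType) (V : finType) (G : game R V)
  (s : V -> V) (nu : V -> R) (E' : {set V * V}) :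
  valid_game G -> improving G ->
  joint_strategy G s ->
  basis_val G nu -> minimises G s nu -> f_strat G s nu != 0 ->
  (forall e, e \in E G -> offset G nu e >= offset G nu (e.1, s e.1)) ->
  E_tight G nu \subset E' -> E' \subset S_set G s nu ->
  (forall v : V, exists v' : V, (v, v') \in E') ->
  exists (nu'' : V -> R) (s' : V -> V),
    [/\ neighbouring G nu nu'', joint_strategy G s',
        f_strat G s' nu'' < f_strat G s nu, better G s' s &
        forall v, (v, s' v) \in E'].
Proof.
move=> [hE hlam] himp js [B hB] hmin hf0 hloc hTE' hE'S hE'.
have hsol : solves_H G nu := hmin.1.
have offge0 : forall e, e \in E G -> 0 <= offset G nu e.
  by move=> e eE; apply/ineq_off; exact: hsol.
pose tE : rel V := fun w t => (w, t) \in E_tight G nu.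
pose Tp : pred V := fun w => [exists t, tE w t].
pose c : V -> R := fun v => if isMax G v then -1 else 1.
pose lm : V -> V -> R := fun w t => lam G (w, t).
have tEE : forall w t, tE w t -> ((w, t) \in E G) /\ offset G nu (w, t) = 0.
  by move=> w t; rewrite /tE inE => /andP [-> /eqP ->].
have hT : forall w, Tp w -> exists t, tE w t by move=> w /existsP.
have hl : forall w t, tE w t -> 0 <= lm w t /\ lm w t < 1.
  by move=> w t /tEE [wE _]; exact: hlam.
have hc : forall v, -1 <= c v <= 1 by move=> v; rewrite /c; case: (isMax G v); lra.
have [d [bd [dN [dT dIn]]]] := @game_fix R V Tp tE (isMax G) lm c hT hl hc.
have [u Nu] : exists u, ~~ Tp u.
  case: (boolP [exists u, ~~ Tp u]) => [/existsP //|].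
  rewrite negb_exists => /forallP allT; exfalso; move/negP: hf0; apply.
  rewrite /f_strat big1 // => v _.
  have /existsP [t tt] := negbNE (allT v).
  have [vtE z] := tEE _ _ tt.
  apply/eqP; rewrite eq_le offge0 ?js // andbT -z.
  exact: (hloc (v, t) vtE).
pose s' : V -> V := fun v =>
  if [pick t | tE v t && (d v == lm v t * d t)] is Some t then t
  else odflt v [pick t | (v, t) \in E'].
have s'E' : forall v, (v, s' v) \in E'.
  move=> v; rewrite /s'; case: pickP => [t /andP [tt _]|_].
    by move: tt; rewrite /tE; apply: (fintype.subsetP hTE').
  case: pickP => [t //|none].
  by have [v' hv'] := hE' v; have := none v'; rewrite hv'.
have E'E : forall e, e \in E' -> e \in E G.
  by move=> e /(fintype.subsetP hE'S); rewrite inE => /andP [].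
have js' : joint_strategy G s' by move=> v; exact: E'E.
have offeq : forall v, offset G nu (v, s' v) = offset G nu (v, s v).
  by move=> v; have := fintype.subsetP hE'S _ (s'E' v); rewrite inE => /andP [_ /eqP].
have Dsign : forall v, Dd G d (v, s' v) <= 0 /\ (~~ Tp v -> Dd G d (v, s' v) < 0).
  move=> v; rewrite /s'; case: pickP => [t /andP [tt /eqP dv] | none].
    split; first by rewrite /Dd /= dv /lm; case: (isMax G v); rewrite subrr.
    by move/negP; case; apply/existsP; exists t.
  have NT : ~~ Tp v.
    apply/negP => Tv; have [t [tt dv]] := dT v Tv.
    by have := none t; rewrite tt dv eqxx.
  suff lt0 : Dd G d (v, odflt v [pick t | (v, t) \in E']) < 0 by split => //; exact: ltW.
  case: pickP => [t' ht' | none2]; last first.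
    by have [v' hv'] := hE' v; have := none2 v'; rewrite hv'.
  have [l0 l1] := hlam _ (E'E _ ht').
  have /andP [a b] := bd t'; rewrite /Dd /= (dN v NT) /c.
  by case: (isMax G v); nra.
pose P : pred (V * V) := fun e => (e \in E G) && (offset G nu e != 0).
pose del := \big[Order.min/1]_(e | P e) offset G nu e.
have delpos : 0 < del.
  apply/bigmin_gtP; split => // e /andP [eE ne].
  by rewrite lt_neqAle eq_sym ne offge0.
have delle : forall e, P e -> del <= offset G nu e.
  by move=> e Pe; exact: bigmin_le_cond.
pose x := fun v => nu v + (del / 2) * d v.
have xsol : solves_H G x.
  move=> [w t] eE; apply/ineq_off; rewrite off_lin.
  case: (boolP (offset G nu (w, t) == 0)) => [/eqP z | nz].
    have tt : tE w t by rewrite /tE inE eE z eqxx.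
    have Tw : Tp w by apply/existsP; exists t.
    have := dIn w t Tw tt; rewrite z add0r /Dd /= /lm => h.
    apply: mulr_ge0; first by lra.
    by case: (isMax G w) h; rewrite subr_ge0.
  have hd := delle _ (introT andP (conj eE nz)).
  have [l0 l1] := hlam _ eE.
  have Dge : -2 <= Dd G d (w, t).
    have := bd w; have := bd t; rewrite /Dd /=.
    by case: (isMax G w) => /andP [a b] /andP [a' b']; nra.
  nra.
have fx : f_strat G s' x = f_strat G s nu + (del / 2) * \sum_v Dd G d (v, s' v).
  rewrite /f_strat; under eq_bigr do rewrite off_lin.
  rewrite big_split /= -mulr_sumr; congr (_ + _); apply: eq_bigr => v _; exact: offeq.
have sumlt : \sum_v Dd G d (v, s' v) < 0.
  rewrite (bigD1 u) //=.
  have h1 := (Dsign u).2 Nu.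
  have h2 : \sum_(v | v != u) Dd G d (v, s' v) <= 0.
    by rewrite -oppr_ge0 -sumrN; apply: sumr_ge0 => v _; rewrite oppr_ge0; exact: (Dsign v).1.
  lra.
have fs'nu : f_strat G s' nu = f_strat G s nu by apply: eq_bigr => v _; exact: offeq.
have notmin : ~ minimises G s' nu.
  move=> [_ mm]; have := mm x xsol; rewrite fx fs'nu.
  have : 0 < del / 2 by lra.
  move=> hp; nra.
have [nu'' [nb lt]] := himp.2 s' nu js' (ex_intro _ B hB) notmin.
rewrite fs'nu in lt.
have bv'' : basis_val G nu''.
  by case: nb => B1 [e [e' [_ _ _ _ h2]]]; exists (e' |: (B1 :\ e)).
have sol'' : solves_H G nu'' by case: bv'' => B2 [_ [_ ?]].
have [mus mm] := exists_min js' himp bv''.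
exists nu'', s'; split => //.
exists (f_strat G s' mus), (f_strat G s nu); split; [|split].
- split; [exists mus; split => //; exact: mm.1 | exact: mm.2].
- split; [exists nu; split => // | exact: hmin.2].
- exact: le_lt_trans (mm.2 _ sol'') lt.
Qed.
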